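(* Let $\rho$ be a state of $n$ finite-dimensional systems $1,\dots,n$. Then its total negativity of quantumness equals the minimum disturbance caused by local complete projective measurements on all subsystems, as quantified by the $l_1$-norm in the basis of the measurement: $$Q^{\{1,\dots,n\}}_{\mathcal N}(\rho)=\min_{\bigotimes_{k=1}^n\mathcal B_k}\frac12\Big\|\rho-\big(\textstyle\bigotimes_{k=1}^n\Pi_{\mathcal B_k}\big)[\rho]\Big\|_{l_1}^{\bigotimes_k\mathcal B_k},$$ the minimum being over orthonormal bases $\mathcal B_k$ of each system $k$.
   Context: For an orthonormal basis $\mathcal B=\{|e_i\rangle\}$ of a system, $\Pi_{\mathcal B}[X]=\sum_i|e_i\rangle\langle e_i|X|e_i\rangle\langle e_i|$ (acting on that tensor factor). For a matrix $X$ and orthonormal basis $\{|f_l\rangle\}$, $\|X\|_{l_1}=\sum_{l,l'}|\langle f_l|X|f_{l'}\rangle|$. Negativity: $\mathcal N_{X:Y}(\tau)=(\|\tau^\Gamma\|_1-1)/2$, $\tau^\Gamma$ partial transpose on one party, $\|\cdot\|_1$ trace norm. For a system $k$ of dimension $m$ with orthonormal basis $\{|a_i\rangle\}$, the measurement interaction is the isometry $V_k:k\to k\otimes k'$ ($k'$ $m$-dimensional with computational basis $\{|i\rangle\}$), $V_k|a_i\rangle=|a_i\rangle|i\rangle$. The total negativity of quantumness is $Q^{\{1,\dots,n\}}_{\mathcal N}(\rho)=\min\mathcal N_{\{1,\dots,n\}:\{1',\dots,n'\}}\big((\bigotimes_kV_k)\rho(\bigotimes_kV_k)^\dagger\big)$,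 minimized over all choices of local orthonormal bases. *)

(* Defs.v *)
From HB Require Import structures.
From mathcomp Require Import all_boot all_order all_algebra spectral.
From mathcomp Require Import complex.
From mathcomp Require Import classical_sets reals.

Set Implicit Arguments.
Unset Strict Implicit.
Unset Printing Implicit Defensive.

Import Order.TTheory GRing.Theory Num.Theory.
Local Open Scope ring_scope.

Section QuantumDefs.
Variable R : realType.
Local Notation C := R[i].

(* A linear map from C^J to C^I, given by its matrix entries <i|X|j>,        *)
(* with I, J finite index types (the computational basis).                   *)
Definition lmap (I J : finType) := I -> J -> C.

Definition lmap_mul (I J K : finType) (A : lmap I J) (B : lmap J K) : lmap I K :=
  fun i k => \sum_(j : J) A i j * B j k.

Definition adj (I J : finType) (A : lmap I J) : lmap J I :=
  fun j i => Num.conj (A i j).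

Definition lmap_sub (I J : finType) (A B : lmap I J) : lmap I J :=
  fun i j => A i j - B i j.

Definition mx_of (I : finType) (X : lmap I I) : 'M[C]_#|I| :=
  \matrix_(a, b) X (enum_val a) (enum_val b).

(* Trace norm ||X||_1 = Tr sqrt(X^dagger X) = sum of the singular values of X,
   i.e. the sum of the square roots of the eigenvalues of X^dagger X
   (these eigenvalues are given by the spectral decomposition of the
   normal matrix X^dagger X). *)
Definition trace_norm (I : finType) (X : lmap I I) : R :=
  let M := mx_of X in
  \sum_(a < #|I|)
    Num.sqrt (complex.Re (spectral_diag ((map_mx Num.conj M)^T *m M) 0 a)).

Definition is_state (I : finType) (rho : lmap I I) : Prop :=
  [/\ forall x y, rho y x = Num.conj (rho x y),
      forall v : I -> C,
        0 <= \sum_(x : I) \sum_(y : I) Num.conj (v x) * rho x y * v y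
    & \sum_(x : I) rho x x = 1].

Definition ptranspose2 (I J : finType) (tau : lmap (I * J)%type (I * J)%type)
  : lmap (I * J)%type (I * J)%type :=
  fun xi yl => tau (xi.1, yl.2) (yl.1, xi.2).

Definition negativity (I J : finType) (tau : lmap (I * J)%type (I * J)%type) : R :=
  (trace_norm (ptranspose2 tau) - 1) / 2.

(* n systems; system k has dimension d k.  The computational basis of the   *)
(* joint system 1...n is indexed by the multi-indices [msys d].             *)
Definition msys (n : nat) (d : 'I_n -> nat) : finType :=
  {dffun forall k : 'I_n, 'I_(d k)}.

(* A local orthonormal basis B_k of system k is encoded by a unitary matrix  *)
(* U k : 'M_(d k) whose rows are the basis vectors: |a^k_i> has components  *)
(* <x|a^k_i> = U k i x.  (U k \is unitarymx iff these rows are orthonormal.) *)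
Definition local_bases (n : nat) (d : 'I_n -> nat) :=
  forall k : 'I_n, 'M[C]_(d k).

Definition orthonormal_bases n (d : 'I_n -> nat) (U : local_bases d) : Prop :=
  forall k, U k \is unitarymx.

Definition pbasis n (d : 'I_n -> nat) (U : local_bases d) (i x : msys d) : C :=
  \prod_(k < n) U k (i k) (x k).

Definition melem n (d : 'I_n -> nat) (U : local_bases d)
  (X : lmap (msys d) (msys d)) (i j : msys d) : C :=
  \sum_(x : msys d) \sum_(y : msys d)
     Num.conj (pbasis U i x) * X x y * pbasis U j y.

(* (x)_k Pi_{B_k} [X] = sum_i |E_i><E_i| X |E_i><E_i|. *)
Definition dephase n (d : 'I_n -> nat) (U : local_bases d)
  (X : lmap (msys d) (msys d)) : lmap (msys d) (msys d) :=
  fun x y => \sum_(i : msys d)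
     pbasis U i x * melem U X i i * Num.conj (pbasis U i y).

Definition l1norm n (d : 'I_n -> nat) (U : local_bases d)
  (X : lmap (msys d) (msys d)) : R :=
  \sum_(i : msys d) \sum_(j : msys d) complex.Re `|melem U X i j|.

(* Measurement interaction V_k : k -> k (x) k', V_k |a_i> = |a_i>|i>, i.e.   *)
(* V_k = sum_i |a_i>|i><a_i|; entries <x,i'|V_k|y> = <x|a_{i'}> <a_{i'}|y>. *)
Definition meas_iso n (d : 'I_n -> nat) (U : local_bases d) (k : 'I_n)
  : lmap ('I_(d k) * 'I_(d k))%type 'I_(d k) :=
  fun xi y => U k xi.2 xi.1 * Num.conj (U k xi.2 y).

(* (x)_k V_k : (1...n) -> (1...n)(1'...n') (systems reordered so that the   *)
(* unprimed systems come first, the primed ancillas second).                *)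
Definition meas_iso_all n (d : 'I_n -> nat) (U : local_bases d)
  : lmap (msys d * msys d)%type (msys d) :=
  fun xi y => \prod_(k < n) meas_iso (k := k) U (xi.1 k, xi.2 k) (y k).

Definition premeasure n (d : 'I_n -> nat) (U : local_bases d)
  (rho : lmap (msys d) (msys d)) : lmap (msys d * msys d)%type (msys d * msys d)%type :=
  lmap_mul (lmap_mul (meas_iso_all U) rho) (adj (meas_iso_all U)).

Definition total_neg_quantumness n (d : 'I_n -> nat)
  (rho : lmap (msys d) (msys d)) : R :=
  inf [set r : R | exists U : local_bases d,
         orthonormal_bases U /\ r = negativity (premeasure U rho)].

End QuantumDefs.

(* Main.v *)
Require Import Defs.
From HB Require Import structures.
From mathcomp Require Import all_boot all_order all_algebra spectral.
From mathcomp Require Import complex.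
From mathcomp Require Import classical_sets reals.
From mathcomp Require Import ring.
Import Order.TTheory GRing.Theory Num.Theory.
Local Open Scope ring_scope.

Lemma sum_dffun_prod (K : comNzRingType) (I : finType) (T_ : I -> finType)
  (F : forall i, T_ i -> K) :
  \sum_(x : {dffun forall i, T_ i}) \prod_i F i (x i) = \prod_i \sum_(t : T_ i) F i t.
Proof.
rewrite (reindex (@dffun_of_fprod I T_)); last first.
  by apply: onW_bij; exact: dffun_of_fprod_bij.
transitivity (\sum_(t : fprod T_) \prod_(i in I) [ffun t => F i t] (t i)).
  by apply: eq_bigr => t _; apply: eq_bigr => i _; rewrite !ffunE.
rewrite (@big_fprod K 0 1 *%R +%R I T_ (fun i => [ffun t => F i t])).
rewrite -(@bigA_distr_big_dep K 0 1 *%R +%R I _ (tagged_with T_) (fun i j => untag 0 [ffun t => F i t] j)).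
apply: eq_bigr => i _.
rewrite -(@big_tag K 0 +%R I T_ (fun i t => [ffun t => F i t] t)).
by apply: eq_bigr => t _; rewrite ffunE.
Qed.

Lemma sum_pair (K : nmodType) (T1 T2 : finType) (F : T1 * T2 -> K) :
  \sum_(p : T1 * T2) F p = \sum_(a : T1) \sum_(b : T2) F (a, b).
Proof. by rewrite pair_bigA; apply: eq_bigr => -[]. Qed.

Section Spec.
Variable F : fieldType.

Lemma char_poly_similar N (P B : 'M[F]_N) : P \in unitmx ->
  char_poly (invmx P *m B *m P) = char_poly B.
Proof.
move=> Pu.
set Pi := map_mx polyC (invmx P); set Pp := map_mx polyC P.
have hPP : Pi *m Pp = 1%:M by rewrite -map_mxM mulVmx // map_mx1.
have hdet : \det Pi * \det Pp = 1 by rewrite -det_mulmx hPP det1.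
rewrite /char_poly /char_poly_mx !map_mxM -/Pi -/Pp.
set Bp := map_mx _ B.
have -> : 'X%:M - Pi *m Bp *m Pp = Pi *m ('X%:M - Bp) *m Pp.
  by rewrite mulmxBr mulmxBl; congr (_ - _); rewrite scalar_mxC -mulmxA hPP mulmx1.
by rewrite !det_mulmx mulrAC hdet mul1r.
Qed.

Lemma char_poly_diag N (v : 'rV[F]_N) :
  char_poly (diag_mx v) = \prod_(i < N) ('X - (v 0 i)%:P).
Proof.
rewrite char_poly_trig ?diag_mx_is_trig //.
by apply: eq_bigr => i _; rewrite mxE eqxx mulr1n.
Qed.

Lemma spec_sum N (P Q : 'M[F]_N) (v w : 'rV[F]_N) (K : nmodType) (f : F -> K) :
  P \in unitmx -> Q \in unitmx ->
  invmx P *m diag_mx v *m P = invmx Q *m diag_mx w *m Q ->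
  \sum_(i < N) f (v 0 i) = \sum_(i < N) f (w 0 i).
Proof.
move=> Pu Qu eqA.
have hc : char_poly (diag_mx v) = char_poly (diag_mx w).
  by rewrite -(@char_poly_similar N P (diag_mx v) Pu) eqA char_poly_similar.
rewrite !char_poly_diag in hc.
have hp : perm_eq [seq v 0 i | i <- index_enum 'I_N] [seq w 0 i | i <- index_enum 'I_N].
  by apply: prod_XsubC_eq; rewrite !big_map.
have := @perm_big K +%R 0 F _ _ xpredT f hp.
by rewrite !big_map.
Qed.
End Spec.

Local Open Scope sesquilinear_scope.

Lemma sqrt_Re_normsq (R : realType) (z : R[i]) :
  Num.sqrt (complex.Re (Num.conj z * z)) = complex.Re `|z|.
Proof.
rewrite normc_def /=; case: z => a b /=.
congr (Num.sqrt _); ring.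
Qed.

Lemma ReD (R : realType) (x y : R[i]) : complex.Re (x + y) = complex.Re x + complex.Re y.
Proof. by case: x => a b; case: y => c e. Qed.

Lemma Re_sum (R : realType) (T : finType) (F : T -> R[i]) :
  complex.Re (\sum_(t : T) F t) = \sum_(t : T) complex.Re (F t).
Proof. by apply: (big_morph _ (@ReD R)). Qed.

Section Main.
Variables (R : realType) (n : nat) (d : 'I_n -> nat) (U : local_bases R d).
Hypothesis HU : orthonormal_bases U.
Local Notation C := R[i].
Local Notation I := (msys d).
Local Notation E := (pbasis U).

Lemma dffun_prod_delta (i j : I) :
  \prod_(k < n) ((i k == j k)%:R : C) = (i == j)%:R.
Proof.
have [->|neq] := eqVneq i j.
  by rewrite big1 // => k _; rewrite eqxx.
have [k hk] : exists k, i k != j k.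
  apply/existsP; apply: contraNT neq => /existsPn H.
  by apply/eqP/ffunP => k; apply/eqP; move: (H k); rewrite negbK.
by rewrite (bigD1 k) //= (negbTE hk) mul0r.
Qed.

Lemma unit_row k (a b : 'I_(d k)) :
  \sum_(t < d k) U k a t * Num.conj (U k b t) = (a == b)%:R.
Proof.
have /unitarymxP H := HU k.
move/matrixP: H => /(_ a b); rewrite !mxE => <-.
by apply: eq_bigr => t _; rewrite !mxE.
Qed.

Lemma unit_col k (x y : 'I_(d k)) :
  \sum_(a < d k) U k a x * Num.conj (U k a y) = (x == y)%:R.
Proof.
have Hu := HU k.
have H : (U k)^T \is unitarymx by rewrite trmx_unitary.
have /unitarymxP H2 := H.
move/matrixP: H2 => /(_ x y); rewrite !mxE => <-.
by apply: eq_bigr => t _; rewrite !mxE.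
Qed.

Lemma orthE (i j : I) :
  \sum_(x : I) E i x * Num.conj (E j x) = (i == j)%:R.
Proof.
rewrite -dffun_prod_delta.
transitivity (\prod_(k < n) \sum_(t < d k) U k (i k) t * Num.conj (U k (j k) t)); last first.
  by apply: eq_bigr => k _; rewrite unit_row.
rewrite -(@sum_dffun_prod C).
by apply: eq_bigr => x _; rewrite /pbasis rmorph_prod -big_split.
Qed.

Lemma complE (x y : I) :
  \sum_(i : I) E i x * Num.conj (E i y) = (x == y)%:R.
Proof.
rewrite -dffun_prod_delta.
transitivity (\prod_(k < n) \sum_(a < d k) U k a (x k) * Num.conj (U k a (y k))); last first.
  by apply: eq_bigr => k _; rewrite unit_col.
rewrite -(@sum_dffun_prod C _ (fun k => 'I_(d k)) (fun k a => U k a (x k) * Num.conj (U k a (y k)))).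
by apply: eq_bigr => i _; rewrite /pbasis rmorph_prod -big_split.
Qed.

Lemma meas_allE (x a z : I) :
  meas_iso_all U (x, a) z = E a x * Num.conj (E a z).
Proof. by rewrite /meas_iso_all /meas_iso /pbasis rmorph_prod -big_split. Qed.

Variable rho : lmap R I I.

Lemma premeasureE (x a y b : I) :
  premeasure U rho (x, a) (y, b) = E a x * melem U rho a b * Num.conj (E b y).
Proof.
rewrite /premeasure /lmap_mul /adj /melem.
under eq_bigr => w _ do rewrite meas_allE big_distrl /=.
rewrite exchange_big /= mulr_sumr mulr_suml; apply: eq_bigr => z _.
rewrite mulr_sumr mulr_suml; apply: eq_bigr => w _.
rewrite meas_allE rmorphM /= conjCK.
rewrite !mulrA; ring.
Qed.

Local Notation rt := (melem U rho).
Local Notation X := (ptranspose2 (premeasure U rho)).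

Definition Wf (r p : I * I) : C := Num.conj (E r.1 p.1) * (r.2 == p.2)%:R.
Definition Df (r : I * I) : C := Num.conj (rt r.2 r.1) * rt r.2 r.1.

Lemma gram_lhs (y j y' j' : I) :
  \sum_(r : I * I) Num.conj (X r (y, j)) * X r (y', j') =
  \sum_(i : I) (j' == j)%:R * (Num.conj (rt j i) * rt j' i * E i y * Num.conj (E i y')).
Proof.
rewrite sum_pair /= exchange_big /=; apply: eq_bigr => i _.
rewrite -orthE mulr_suml; apply: eq_bigr => x _.
rewrite /ptranspose2 /= !premeasureE !rmorphM /= !conjCK; ring.
Qed.

Lemma gram_rhs (y j y' j' : I) :
  \sum_(r : I * I) Num.conj (Wf r (y, j)) * Df r * Wf r (y', j') =
  \sum_(i : I) (j' == j)%:R * (Num.conj (rt j i) * rt j' i * E i y * Num.conj (E i y')).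
Proof.
rewrite sum_pair /=; apply: eq_bigr => i _.
rewrite (bigD1 j) //= big1 ?addr0; last first.
  move=> k hk; rewrite /Wf (negbTE hk) mulr0 rmorph0 !mul0r //.
rewrite /Wf /Df /= eqxx mulr1 conjCK.
have [->|hne] := eqVneq j' j; rewrite /= ?mulr1 ?mul1r ?mulr0 ?mul0r //; ring.
Qed.

Lemma W_unit (r r' : I * I) :
  \sum_(p : I * I) Wf r p * Num.conj (Wf r' p) = (r == r')%:R.
Proof.
case: r r' => i k [i' k'].
rewrite sum_pair /= exchange_big /= (bigD1 k) //= [X in _ + X]big1 ?addr0; last first.
  move=> j hj; apply: big1 => y _.
  by rewrite /Wf /= eq_sym (negbTE hj) mulr0 mul0r.
transitivity ((k == k')%:R * \sum_(y : I) E i' y * Num.conj (E i y)).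
  rewrite mulr_sumr; apply: eq_bigr => y _.
  rewrite /Wf /= eqxx !rmorphM /= conjCK !rmorph_nat; rewrite eq_sym; ring.
have -> : \sum_(y : I) E i' y * Num.conj (E i y) = (i' == i)%:R by apply: orthE.
rewrite xpair_eqE.
by rewrite -natrM mulnb andbC [i' == i]eq_sym.
Qed.

Lemma sum_ev (K : nmodType) (T : finType) (G : T -> K) :
  \sum_(c < #|T|) G (enum_val c) = \sum_(t : T) G t.
Proof. by rewrite -big_enum_val. Qed.

Local Notation Wm := (mx_of Wf).

Lemma Wm_unitary : Wm \is unitarymx.
Proof.
apply/unitarymxP/matrixP => a b; rewrite !mxE.
under eq_bigr do rewrite !mxE.
rewrite (@sum_ev _ _ (fun p => Wf (enum_val a) p * Num.conj (Wf (enum_val b) p))).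
by rewrite W_unit (inj_eq enum_val_inj).
Qed.

Local Notation Mx := (mx_of X).
Definition Dv : 'rV[C]_#|{: I * I}| := \row_a Df (enum_val a).

Lemma A_eq : (map_mx Num.conj Mx)^T *m Mx = invmx Wm *m diag_mx Dv *m Wm.
Proof.
rewrite invmx_unitary ?Wm_unitary // mul_mx_diag.
apply/matrixP => a b; rewrite !mxE.
under eq_bigr do rewrite !mxE.
under [RHS]eq_bigr do rewrite !mxE.
rewrite (@sum_ev _ _ (fun r => Num.conj (X r (enum_val a)) * X r (enum_val b))).
rewrite (@sum_ev _ _ (fun r => Num.conj (Wf r (enum_val a)) * Df r * Wf r (enum_val b))).
case: (enum_val a) => y j; case: (enum_val b) => y' j'.
by rewrite gram_lhs gram_rhs.
Qed.

Lemma trace_normE :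
  trace_norm X = \sum_(i : I) \sum_(j : I) complex.Re `|rt i j|.
Proof.
rewrite /trace_norm.
set A := (map_mx Num.conj Mx)^T *m Mx.
have Anormal : A \is normalmx.
  apply/orthomx_spectral_subproof; exists (Wm, Dv) => //=.
    exact: Wm_unitary.
  exact: A_eq.
have /orthomx_spectralP hA := Anormal.
rewrite (@spec_sum _ _ (spectralmx A) Wm (spectral_diag A) Dv R
   (fun z => Num.sqrt (complex.Re z)) (spectral_unit A) (unitarymx_unit Wm_unitary)); last first.
  by rewrite -hA; exact: A_eq.
under eq_bigr do rewrite mxE.
rewrite (@sum_ev _ _ (fun r => Num.sqrt (complex.Re (Df r)))).
rewrite sum_pair exchange_big /=; apply: eq_bigr => i _; apply: eq_bigr => j _.
by rewrite /Df /= sqrt_Re_normsq.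
Qed.

Hypothesis Hrho : is_state rho.

Lemma rt_ge0 (i : I) : 0 <= rt i i.
Proof. by case: Hrho => _ H _; exact: (H (E i)). Qed.

Lemma sum_diag : \sum_(i : I) rt i i = 1.
Proof.
case: Hrho => _ _ <-.
rewrite /melem exchange_big /=; apply: eq_bigr => x _.
rewrite exchange_big /= (bigD1 x) //= [X in _ + X]big1 ?addr0.
  transitivity (rho x x * \sum_(i : I) E i x * Num.conj (E i x)).
    by rewrite mulr_sumr; apply: eq_bigr => i _; ring.
  by rewrite complE eqxx mulr1.
move=> y hy.
transitivity (rho x y * \sum_(i : I) E i y * Num.conj (E i x)).
  by rewrite mulr_sumr; apply: eq_bigr => i _; ring.
by rewrite complE (negbTE hy) mulr0.
Qed.

Lemma melem_sub (A B : lmap R I I) (i j : I) :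
  melem U (lmap_sub A B) i j = melem U A i j - melem U B i j.
Proof.
rewrite /melem /lmap_sub -sumrB; apply: eq_bigr => x _.
rewrite -sumrB; apply: eq_bigr => y _; ring.
Qed.

Lemma melem_deph (i j : I) : melem U (dephase U rho) i j = (i == j)%:R * rt i i.
Proof.
rewrite {1}/melem /dephase.
transitivity (\sum_(k : I) rt k k * ((\sum_(x : I) E k x * Num.conj (E i x)) *
   (\sum_(y : I) E j y * Num.conj (E k y)))).
  transitivity (\sum_(x : I) \sum_(y : I) \sum_(k : I)
     (rt k k * (E k x * Num.conj (E i x) * (E j y * Num.conj (E k y))))).
    apply: eq_bigr => x _; apply: eq_bigr => y _.
    rewrite mulr_sumr mulr_suml; apply: eq_bigr => k _; ring.
  under eq_bigr do rewrite exchange_big.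
  rewrite exchange_big; apply: eq_bigr => k _.
  rewrite big_distrlr mulr_sumr; apply: eq_bigr => x _.
  by rewrite mulr_sumr.
rewrite (bigD1 i) //= [X in _ + X]big1 ?addr0.
  by rewrite !orthE eqxx [j == i]eq_sym; case: (i == j); rewrite /= ?mulr1n ?mulr0n; ring.
by move=> k hk; rewrite orthE (negbTE hk) /= mulr0n; ring.
Qed.

Lemma row_l1 (i : I) :
  \sum_(j : I) complex.Re `|rt i j - (i == j)%:R * rt i i| =
  \sum_(j : I) complex.Re `|rt i j| - complex.Re (rt i i).
Proof.
rewrite (bigD1 i) // [in RHS](bigD1 i) // eqxx mul1r subrr normr0.
rewrite (ger0_norm (rt_ge0 i)).
have -> : \sum_(j | true && (j != i)) complex.Re `|rt i j - (i == j)%:R * rt i i| =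
          \sum_(j | true && (j != i)) complex.Re `|rt i j|.
  by apply: eq_bigr => j hj; rewrite eq_sym (negbTE hj) mul0r subr0.
have -> : complex.Re (0 : R[i]) = 0 by [].
by rewrite /= add0r addrC addrK.
Qed.

Lemma key : negativity (premeasure U rho) = l1norm U (lmap_sub rho (dephase U rho)) / 2.
Proof.
rewrite /negativity trace_normE /l1norm.
under [in RHS]eq_bigr do under eq_bigr do rewrite melem_sub melem_deph.
under [in RHS]eq_bigr do rewrite row_l1.
by rewrite sumrB -Re_sum sum_diag.
Qed.
End Main.

Theorem corollary2 (R : realType) (n : nat) (d : 'I_n -> nat)
  (rho : lmap R (msys d) (msys d)) :
  is_state rho ->
  total_neg_quantumness rho =
  inf [set r : R | exists U : local_bases R d,
         orthonormal_bases U /\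
         r = l1norm U (lmap_sub rho (dephase U rho)) / 2].
Proof.
move=> Hs; rewrite /total_neg_quantumness; congr (inf _).
apply/seteqP; split => r /= [V [HV ->]]; exists V; split => //.
  by rewrite key.
by rewrite key.
Qed.
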